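(* No maximal ideal $\mathcal{I}$ on $\omega$ with $\mathrm{fin} \subseteq \mathcal{I}$ is uniformly weakly Ramsey.
   Context: $\mathrm{fin}$ is the ideal of finite subsets of $\omega$; $\mathcal{I}^+$ denotes the $\mathcal{I}$-positive sets (subsets of $\omega$ not in $\mathcal{I}$); for $A \subseteq \omega$, $\mathcal{I}|A = \{I \subseteq A : I \in \mathcal{I}\}$, an ideal on $A$, and $(\mathcal{I}|A)^+$ is the family of subsets of $A$ not in $\mathcal{I}$. A coloring is a function $c : [\omega]^2 \to 2$; it is subadditive if $c(\{m,n\}) \le c(\{m,k\}) + c(\{n,k\})$ for all $m<n<k$. A set $H$ is 0-homogeneous for $c$ if $c(\{m,n\}) = 0$ for all distinct $m,n \in H$; $H$ is nowhere 0-homogeneous (with respect to $\mathcal{I}$ and $c$) if every $B \in (\mathcal{I}|H)^+$ contains distinct $m,n$ with $c(\{m,n\}) = 1$. A function $\Phi : [\omega]^\omega \times 2^{[\omega]^2} \to [\omega]^\omega$ witnesses that $\mathcal{I}$ is weakly Ramsey if for every $A \in \mathcal{I}^+$ and every subadditive coloring $c$, $H = \Phi(A,c)$ belongs to $(\mathcal{I}|A)^+$ and is either 0-homogeneous or nowhere 0-homogeneous for $c$. $\mathcal{I}$ is uniformly weakly Ramsey if some Borel function witnesses that $\mathcal{I}$ is weakly Ramsey. *)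

(* Defs.v *)
(* Subsets of omega are represented by characteristic functions nat -> bool. *)

Definition subset (A B : nat -> bool) : Prop := forall n, A n = true -> B n = true.
Definition emptyset : nat -> bool := fun _ => false.
Definition fullset : nat -> bool := fun _ => true.
Definition unionb (A B : nat -> bool) : nat -> bool := fun n => orb (A n) (B n).
Definition finite_set (A : nat -> bool) : Prop :=
  exists N, forall n, A n = true -> n < N.

Definition is_ideal (I : (nat -> bool) -> Prop) : Prop :=
  I emptyset /\
  (forall A B, subset A B -> I B -> I A) /\
  (forall A B, I A -> I B -> I (unionb A B)) /\
  ~ I fullset.

Definition maximal_ideal (I : (nat -> bool) -> Prop) : Prop :=
  is_ideal I /\
  forall J, is_ideal J -> (forall A, I A -> J A) -> forall A, J A -> I A.

Definition contains_fin (I : (nat -> bool) -> Prop) : Prop :=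
  forall A, finite_set A -> I A.

(* Colorings c : [omega]^2 -> 2 are encoded by c : nat -> nat -> bool,
   the color of {m,n} being read off with m < n; [col c m n] is symmetric. *)
Definition col (c : nat -> nat -> bool) (m n : nat) : bool :=
  if Nat.ltb m n then c m n else c n m.

Definition subadditive (c : nat -> nat -> bool) : Prop :=
  forall m n k, m < n -> n < k ->
    (if col c m n then 1 else 0) <=
    (if col c m k then 1 else 0) + (if col c n k then 1 else 0).

Definition zero_homogeneous (c : nat -> nat -> bool) (H : nat -> bool) : Prop :=
  forall m n, H m = true -> H n = true -> m <> n -> col c m n = false.

Definition nowhere_zero_homogeneous (I : (nat -> bool) -> Prop)
    (c : nat -> nat -> bool) (H : nat -> bool) : Prop :=
  forall B, subset B H -> ~ I B ->
    exists m n, B m = true /\ B n = true /\ m <> n /\ col c m n = true.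

Definition pos_restr (I : (nat -> bool) -> Prop) (A H : nat -> bool) : Prop :=
  subset H A /\ ~ I H.

Definition witnesses_weakly_Ramsey (I : (nat -> bool) -> Prop)
    (Phi : (nat -> bool) * (nat -> nat -> bool) -> (nat -> bool)) : Prop :=
  forall A c, ~ I A -> subadditive c ->
    pos_restr I A (Phi (A, c)) /\
    (zero_homogeneous c (Phi (A, c)) \/ nowhere_zero_homogeneous I c (Phi (A, c))).

(* Borel sets of the Polish space 2^omega x 2^(omega x omega) (product topology):
   the sigma-algebra generated by the subbasic clopen cylinders. *)
Definition Dom := ((nat -> bool) * (nat -> nat -> bool))%type.

Inductive borel_dom : (Dom -> Prop) -> Prop :=
  | borel_cyl1 : forall n, borel_dom (fun p => fst p n = true)
  | borel_cyl2 : forall m n, borel_dom (fun p => snd p m n = true)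
  | borel_compl : forall S, borel_dom S -> borel_dom (fun p => ~ S p)
  | borel_cunion : forall S : nat -> Dom -> Prop,
      (forall i, borel_dom (S i)) -> borel_dom (fun p => exists i, S i p)
  | borel_ext : forall S T, borel_dom S -> (forall p, S p <-> T p) -> borel_dom T.

(* Borel function into 2^omega: preimages of the subbasic cylinders
   (which generate the Borel sigma-algebra of 2^omega) are Borel. *)
Definition borel_function (Phi : Dom -> (nat -> bool)) : Prop :=
  forall n, borel_dom (fun p => Phi p n = true).

Definition uniformly_weakly_Ramsey (I : (nat -> bool) -> Prop) : Prop :=
  exists Phi, borel_function Phi /\ witnesses_weakly_Ramsey I Phi.

(* Main.v *)
Require Import Defs.
From Stdlib Require Import Arith Lia List Bool Classical IndefiniteDescription Cantor.
Import ListNotations.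

Definition ext (x : nat -> bool) (u : list bool) : Prop :=
  forall i, i < length u -> x i = nth i u false.
Definition pref (u v : list bool) : Prop :=
  length u <= length v /\ forall i, i < length u -> nth i u false = nth i v false.
Definition gen (F : nat -> list bool -> list bool) x : Prop :=
  forall k, exists u, ext x (F k u).
Definition okF (F : nat -> list bool -> list bool) : Prop := forall k u, pref u (F k u).
Definition Op (W : list bool -> Prop) x : Prop := exists u, W u /\ ext x u.
Definition BP (S : (nat -> bool) -> Prop) : Prop :=
  exists W F, okF F /\ forall x, gen F x -> (S x <-> Op W x).

Lemma pref_refl u : pref u u.
Proof. split; auto. Qed.
Lemma pref_trans u v w : pref u v -> pref v w -> pref u w.
Proof. intros [h1 h2] [h3 h4]; split; [lia|]. intros i hi. rewrite h2 by lia. apply h4; lia. Qed.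
Lemma pref_app u a : pref u (u ++ a).
Proof. split. rewrite length_app; lia. intros i hi. rewrite app_nth1; auto. Qed.
Lemma ext_pref x v w : ext x w -> pref v w -> ext x v.
Proof. intros h [h1 h2] i hi. rewrite h2 by auto. apply h; lia. Qed.
Lemma ext_comp x u v : ext x u -> ext x v -> pref u v \/ pref v u.
Proof.
  intros hu hv. destruct (le_lt_dec (length u) (length v)).
  - left; split; auto. intros i hi. rewrite <- hu, <- hv; auto; lia.
  - right; split; [lia|]. intros i hi. rewrite <- hu, <- hv; auto; lia.
Qed.

Definition pre (x : nat -> bool) n := map x (seq 0 n).
Lemma pre_len x n : length (pre x n) = n.
Proof. unfold pre. rewrite length_map, length_seq; auto. Qed.
Lemma ext_pre x n : ext x (pre x n).
Proof.
  intros i hi. rewrite pre_len in hi. unfold pre.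
  rewrite nth_indep with (d' := x 0) by (rewrite length_map, length_seq; auto).
  rewrite map_nth, seq_nth; auto.
Qed.

Fixpoint tseq (F : nat -> list bool -> list bool) s k : list bool :=
  match k with 0 => s | S k => F k (tseq F s k ++ [false]) end.

Lemma baire F s : okF F -> exists x, ext x s /\ gen F x.
Proof.
  intro hF.
  assert (hstep : forall k, pref (tseq F s k) (tseq F s (S k))).
  { intro k. simpl. eapply pref_trans; [apply pref_app| apply hF]. }
  assert (hlen : forall k, k <= length (tseq F s k)).
  { induction k; simpl; [lia|]. destruct (hF k (tseq F s k ++ [false])) as [h _].
    rewrite length_app in h; simpl in h; lia. }
  assert (hmono : forall k j, pref (tseq F s k) (tseq F s (j + k))).
  { intros k j; induction j; simpl; [apply pref_refl|]. eapply pref_trans; [apply IHj|apply hstep]. }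
  assert (hmono' : forall k l, k <= l -> pref (tseq F s k) (tseq F s l)).
  { intros k l hkl. replace l with ((l - k) + k) by lia. apply hmono. }
  exists (fun i => nth i (tseq F s (S i)) false).
  assert (hext : forall k, ext (fun i => nth i (tseq F s (S i)) false) (tseq F s k)).
  { intros k i hi. destruct (le_lt_dec k (S i)).
    - destruct (hmono' _ _ l) as [_ h]. rewrite h; auto.
    - destruct (hmono' (S i) k ltac:(lia)) as [_ h]. rewrite h; auto. }
  split. apply (hext 0).
  intro k. exists (tseq F s k ++ [false]). apply (hext (S k)).
Qed.

Definition combn (H : nat -> nat -> list bool -> list bool) : nat -> list bool -> list bool :=
  fun n => H (fst (Cantor.of_nat n)) (snd (Cantor.of_nat n)).
Lemma combn_ok H : (forall i, okF (H i)) -> okF (combn H).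
Proof. intros h n u. apply h. Qed.
Lemma combn_gen H x : gen (combn H) x -> forall i, gen (H i) x.
Proof.
  intros h i k. destruct (h (Cantor.to_nat (i, k))) as [u hu]. exists u.
  unfold combn in hu. rewrite Cantor.cancel_of_to in hu. exact hu.
Qed.

Lemma BP_ext S T : BP S -> (forall x, S x <-> T x) -> BP T.
Proof.
  intros [W [F [hF h]]] e. exists W, F. split; auto. intros x g. rewrite <- e. auto.
Qed.

Lemma BP_local S N : (forall x y, (forall i, i < N -> x i = y i) -> S x -> S y) -> BP S.
Proof.
  intro hS.
  exists (fun u => N <= length u /\ S (fun i => nth i u false)), (fun _ u => u).
  split. intros k u; apply pref_refl.
  intros x _. split.
  - intro hx. exists (pre x N). rewrite pre_len. split; [split; [lia|]|apply ext_pre].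
    apply (hS x); auto. intros i hi. apply ext_pre. rewrite pre_len; auto.
  - intros [u [[hl hu] he]]. refine (hS _ x _ hu). intros i hi. symmetry. apply he. lia.
Qed.

Lemma BP_cunion (S : nat -> (nat -> bool) -> Prop) :
  (forall i, BP (S i)) -> BP (fun x => exists i, S i x).
Proof.
  intro h.
  assert (h' : forall i, exists p : (list bool -> Prop) * (nat -> list bool -> list bool),
    okF (snd p) /\ forall x, gen (snd p) x -> (S i x <-> Op (fst p) x)).
  { intro i. destruct (h i) as [W [F hh]]. exists (W, F). exact hh. }
  destruct (functional_choice _ h') as [f hf].
  exists (fun u => exists i, fst (f i) u), (combn (fun i => snd (f i))).
  split. apply combn_ok. intro i; apply hf.
  intros x g. pose proof (combn_gen _ _ g) as g'. split.
  - intros [i hi]. apply (proj2 (hf i) x (g' i)) in hi. destruct hi as [u [hu he]].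
    exists u; split; eauto.
  - intros [u [[i hu] he]]. exists i. apply (proj2 (hf i) x (g' i)). exists u; auto.
Qed.

Definition comp0 (W : list bool -> Prop) u :=
  forall v, (pref u v \/ pref v u) -> ~ W v.

Lemma BP_compl Sx : BP Sx -> BP (fun x => ~ Sx x).
Proof.
  intros [W [F [hF h]]].
  assert (hc : forall u, exists w, pref u w /\ ((exists v, W v /\ pref v w) \/ comp0 W u)).
  { intro u. destruct (classic (exists v, (pref u v \/ pref v u) /\ W v)) as [[v [[hv|hv] hw]]|hn].
    - exists v. split; auto. left; exists v; split; auto. apply pref_refl.
    - exists u. split. apply pref_refl. left; exists v; auto.
    - exists u. split. apply pref_refl. right. intros v hv hw. apply hn; eauto. }
  destruct (functional_choice _ hc) as [f hf].
  exists (comp0 W), (fun n => match n with 0 => fun u => f u | S k => F k end).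
  split.
  { intros [|k] u; [apply hf|apply hF]. }
  intros x g.
  assert (gF : gen F x). { intro k. destruct (g (S k)) as [u hu]. exists u; exact hu. }
  rewrite (h x gF).
  destruct (g 0) as [u hu]. simpl in hu. destruct (hf u) as [hp [[v [hv hvw]]|hw]].
  - split. intro hn. exfalso. apply hn. exists v. split; auto. eapply ext_pref; eauto.
    intros [u' [hu' he']] _. apply (hu' v); auto.
    apply (ext_comp x). exact he'. apply (ext_pref x v (f u)); auto.
  - split. intros _. exists u. split; auto. eapply ext_pref; eauto.
    intros [u' [hu' he']] [v [hv he]]. apply (hu' v); auto. eapply ext_comp; eauto.
Qed.

Definition hx n (x : nat -> bool) i := if i <? n then x i else negb (x i).
Definition hl n (v : list bool) :=
  map (fun i => if i <? n then nth i v false else negb (nth i v false)) (seq 0 (length v)).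
Lemma hl_len n v : length (hl n v) = length v.
Proof. unfold hl. rewrite length_map, length_seq; auto. Qed.
Lemma nth_hl n v i : i < length v ->
  nth i (hl n v) false = if i <? n then nth i v false else negb (nth i v false).
Proof.
  intro hi. unfold hl.
  set (f := fun i => if i <? n then nth i v false else negb (nth i v false)).
  rewrite nth_indep with (d' := f 0) by (rewrite length_map, length_seq; auto).
  rewrite map_nth, seq_nth; auto.
Qed.
Lemma ext_hx n x v : ext x (hl n v) -> ext (hx n x) v.
Proof.
  intros h i hi. specialize (h i). rewrite hl_len, nth_hl in h by auto. specialize (h hi).
  unfold hx. destruct (i <? n); auto. rewrite h. apply negb_involutive.
Qed.
Lemma pref_hl n u w : pref (hl n u) w -> pref u (hl n w).
Proof.
  intros [h1 h2]. rewrite hl_len in h1. split. rewrite hl_len; auto.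
  intros i hi. specialize (h2 i). rewrite hl_len, nth_hl in h2 by auto. specialize (h2 hi).
  rewrite nth_hl by lia. destruct (i <? n); auto. rewrite <- h2. symmetry; apply negb_involutive.
Qed.

Lemma flip_gen F n x : gen (fun k v => hl n (F k (hl n v))) x -> gen F (hx n x).
Proof. intros g k. destruct (g k) as [u hu]. exists (hl n u). apply ext_hx; auto. Qed.
Lemma flip_ok F n : okF F -> okF (fun k v => hl n (F k (hl n v))).
Proof. intros h k v. apply pref_hl. apply h. Qed.

Lemma prime_ideal I : maximal_ideal I -> forall A, ~ I A -> I (fun n => negb (A n)).
Proof.
  intros [[hE [hD [hU hF]]] hM] A hA.
  set (J := fun B => exists X, I X /\ subset B (unionb X A)).
  assert (hJ : ~ is_ideal J).
  { intro hJ. apply hA. apply (hM J hJ).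
    - intros B hB. exists B. split; auto. intros n hn. unfold unionb; rewrite hn; auto.
    - exists emptyset. split; auto. intros n hn. unfold unionb; rewrite hn; apply orb_true_r. }
  assert (J fullset).
  { apply NNPP. intro hn. apply hJ. split; [|split; [|split]].
    - exists emptyset; split; auto. intros n hn'; discriminate.
    - intros B C hBC [X [hX hs]]. exists X; split; auto. intros n hn'; auto.
    - intros B C [X [hX hs]] [Y [hY ht]]. exists (unionb X Y). split; auto.
      intros n hn'. unfold unionb in *. specialize (hs n). specialize (ht n).
      destruct (B n), (C n), (X n), (Y n), (A n); simpl in *; auto.
    - exact hn. }
  destruct H as [X [hX hs]]. apply (hD _ X); auto. intros n hn. specialize (hs n eq_refl).
  unfold unionb in hs. destruct (A n); simpl in *; [discriminate|]. rewrite orb_false_r in hs; auto.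
Qed.

Lemma no_BP I : maximal_ideal I -> contains_fin I -> ~ BP (fun A => ~ I A).
Proof.
  intros hI hFin [W [F [hF h]]].
  pose proof hI as [[hE [hD [hU hFl]]] _].
  assert (key : forall n s, (forall i, i < length s -> i < n) ->
     exists x, ext x s /\ gen F x /\ gen F (hx n x)).
  { intros n s _.
    destruct (baire (combn (fun i => match i with 0 => F | _ => fun k v => hl n (F k (hl n v)) end)) s)
      as [x [hs g]].
    { apply combn_ok. intros [|i]; [auto|apply flip_ok; auto]. }
    exists x. split; auto. split. apply (combn_gen _ _ g 0).
    apply flip_gen. apply (combn_gen _ _ g 1). }
  destruct (classic (exists u, W u)) as [[u0 hu0]|hn].
  - destruct (key (length u0) u0 ltac:(auto)) as [x [hs [g1 g2]]].
    assert (h1 : ~ I x). { apply (h x g1). exists u0; auto. }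
    assert (h2 : ~ I (hx (length u0) x)).
    { apply (h _ g2). exists u0. split; auto. intros i hi. unfold hx.
      replace (i <? length u0) with true by (symmetry; apply Nat.ltb_lt; auto). auto. }
    apply h2. apply (hD _ (unionb (fun n => negb (x n)) (fun i => i <? length u0))).
    + intros i. unfold hx, unionb. destruct (i <? length u0); [intros; apply orb_true_r|].
      rewrite orb_false_r; auto.
    + apply hU. apply prime_ideal; auto. apply hFin. exists (length u0). intros i hi.
      apply Nat.ltb_lt; auto.
  - destruct (key 0 [] ltac:(simpl; lia)) as [x [_ [g1 g2]]].
    assert (h1 : I x). { apply NNPP. intro hx1. apply (h x g1) in hx1. apply hn. destruct hx1 as [u [hu _]]; eauto. }
    assert (h2 : I (hx 0 x)). { apply NNPP. intro hx1. apply (h _ g2) in hx1. apply hn. destruct hx1 as [u [hu _]]; eauto. }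
    apply hFl. apply (hD _ (unionb x (hx 0 x))); auto.
    intros i _. unfold unionb, hx. simpl. destruct (x i); auto.
Qed.

Definition cA (A : nat -> bool) : nat -> nat -> bool := fun m n => xorb (A m) (A n).
Definition gmap (A : nat -> bool) : Dom := (fullset, cA A).

Lemma col_cA A m n : col (cA A) m n = xorb (A m) (A n).
Proof. unfold col, cA. destruct (m <? n); auto. apply xorb_comm. Qed.

Lemma sub_cA A : subadditive (cA A).
Proof.
  intros m n k _ _. rewrite !col_cA. destruct (A m), (A n), (A k); simpl; lia.
Qed.

Lemma borel_BP S : borel_dom S -> BP (fun A => S (gmap A)).
Proof.
  induction 1.
  - apply (BP_local _ 0). intros; simpl; auto.
  - apply (BP_local _ (S (Nat.max m n))). intros x y h. simpl. unfold cA.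
    rewrite (h m), (h n) by lia. auto.
  - apply BP_compl; auto.
  - apply BP_cunion; auto.
  - eapply BP_ext; eauto. intro x; simpl; match goal with h : forall p, _ <-> _ |- _ => apply h end.
Qed.

Lemma BP_and P Q : BP P -> BP Q -> BP (fun x => P x /\ Q x).
Proof.
  intros hP hQ.
  eapply BP_ext.
  - apply BP_compl. apply (BP_cunion (fun i => match i with 0 => fun x => ~ P x | _ => fun x => ~ Q x end)).
    intros [|i]; apply BP_compl; auto.
  - intro x. split.
    + intro h. split; apply NNPP; intro hn; apply h; [exists 0|exists 1]; auto.
    + intros [h1 h2] [[|i] hi]; auto.
Qed.

Theorem fact4p5 (I : (nat -> bool) -> Prop) :
  maximal_ideal I -> contains_fin I -> ~ uniformly_weakly_Ramsey I.
Proof.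
  intros hI hFin [Phi [hB hW]].
  pose proof hI as [[hE [hD [hU hFl]]] _].
  apply (no_BP I hI hFin).
  assert (ch : forall A, ~ I A <-> exists n, Phi (gmap A) n = true /\ A n = true).
  { intro A. destruct (hW fullset (cA A) hFl (sub_cA A)) as [[hsub hpos] hhom].
    unfold gmap. set (H := Phi (fullset, cA A)) in *.
    split.
    - intro hA. apply NNPP. intro hn. apply hpos.
      apply (hD _ (fun n => negb (A n))). 2: apply prime_ideal; auto.
      intros n hn'. destruct (A n) eqn:e; auto. exfalso; apply hn; eauto.
    - intros [n [hn an]] hA.
      destruct hhom as [hz|hnz].
      + apply hpos. apply (hD _ A); auto. intros m hm.
        destruct (Nat.eq_dec m n) as [->|ne]; auto.
        specialize (hz m n hm hn ne). rewrite col_cA, an in hz.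
        destruct (A m); auto.
      + assert (hc : ~ I (fun m => H m && negb (A m))).
        { intro hc. apply hpos. apply (hD _ (unionb A (fun m => H m && negb (A m)))).
          - intros m hm. unfold unionb. rewrite hm. destruct (A m); auto.
          - apply hU; auto. }
        destruct (hnz _ (fun m hm => proj1 (proj1 (andb_true_iff _ _) hm)) hc)
          as [m [k [hm [hk [ne hc']]]]].
        rewrite col_cA in hc'.
        apply andb_true_iff in hm as [_ hm]. apply andb_true_iff in hk as [_ hk].
        destruct (A m), (A k); simpl in *; discriminate. }
  eapply BP_ext; [|intro A; symmetry; apply ch].
  apply BP_cunion. intro n. apply BP_and.
  - apply (borel_BP (fun p => Phi p n = true)). apply hB.
  - apply (BP_local _ (S n)). intros x y h hx. rewrite <- h by lia. auto.
Qed.
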